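(* Let $(A,\circ)$ be a Novikov algebra, $\{a,b\}=a\circ b+b\circ a$, $[a,b]=a\circ b-b\circ a$, and $(a,b,c)^+=\{a,\{b,c\}\}-\{\{a,b\},c\}$. Then for all $a,b,c,d\in A$, $$\{(a,b,c)^+,d\}-\{(a,d,c)^+,b\}=\{[c,a],[b,d]\}.$$
   Context: A (right) Novikov algebra is an algebra $(A,\circ)$ satisfying $a\circ(b\circ c)-(a\circ b)\circ c=a\circ(c\circ b)-(a\circ c)\circ b$ and $a\circ(b\circ c)=b\circ(a\circ c)$ for all $a,b,c$. *)

(* Defs.v *)
From mathcomp Require Import all_boot all_algebra.
Set Implicit Arguments. Unset Strict Implicit. Unset Printing Implicit Defensive.
Import GRing.Theory.
Local Open Scope ring_scope.

Definition bilinear_prod (R : comNzRingType) (A : lmodType R) (m : A -> A -> A) :=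
  (forall a b c, m (a + b) c = m a c + m b c) /\
  (forall a b c, m a (b + c) = m a b + m a c) /\
  (forall (k : R) a b, m (k *: a) b = k *: m a b) /\
  (forall (k : R) a b, m a (k *: b) = k *: m a b).

Definition novikov (A : zmodType) (m : A -> A -> A) :=
  (forall a b c, m a (m b c) - m (m a b) c = m a (m c b) - m (m a c) b) /\
  (forall a b c, m a (m b c) = m b (m a c)).

Definition anticomm (A : zmodType) (m : A -> A -> A) (a b : A) := m a b + m b a.
Definition comm (A : zmodType) (m : A -> A -> A) (a b : A) := m a b - m b a.
Definition assocp (A : zmodType) (m : A -> A -> A) (a b c : A) :=
  anticomm m a (anticomm m b c) - anticomm m (anticomm m a b) c.

(* Main.v *)
From HB Require Import structures.
Require Import Defs.
From mathcomp Require Import all_boot all_algebra.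
From mathcomp Require Import ring.
Import GRing.Theory.
Local Open Scope ring_scope.

Definition Ext (V : zmodType) := (int * V)%type.
HB.instance Definition _ (V : zmodType) := GRing.Zmodule.on (Ext V).
Definition emul (V : zmodType) (p q : Ext V) : Ext V :=
  (p.1 * q.1, p.2 *~ q.1 + q.2 *~ p.1).
Definition eone (V : zmodType) : Ext V := (1, 0).
Lemma emulA V : associative (@emul V).
Proof. case=> n1 x1 [n2 x2] [n3 x3]; rewrite /emul /=; congr pair; first by rewrite mulrA.
by rewrite !mulrzDl -!mulrzA addrA [n3 * n1]mulrC [n2 * n1]mulrC.
Qed.
Lemma emulC V : commutative (@emul V).
Proof. by case=> n1 x1 [n2 x2]; rewrite /emul /= mulrC addrC. Qed.
Lemma emul1 V : left_id (@eone V) (@emul V).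
Proof. by case=> n x; rewrite /emul /eone /= mul1r mul0rz add0r mulr1z. Qed.
Lemma emulD V : left_distributive (@emul V) +%R.
Proof. case=> n1 x1 [n2 x2] [n3 x3]; rewrite /emul /=; congr pair; first by rewrite mulrDl.
by rewrite mulrzDr mulrzDl !addrA; congr (_ + _); rewrite -!addrA; congr (_ + _); rewrite addrC.
Qed.
Lemma eone_neq0 V : @eone V != 0.
Proof. by []. Qed.
HB.instance Definition _ (V : zmodType) := GRing.Zmodule_isComNzRing.Build (Ext V)
  (@emulA V) (@emulC V) (@emul1 V) (@emulD V) (@eone_neq0 V).

Definition iota_ (V : zmodType) (x : V) : Ext V := (0, x).
Arguments iota_ {V}.
Lemma iotaD (V : zmodType) (x y : V) : iota_ (x + y) = iota_ x + iota_ y. Proof. by []. Qed.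
Lemma iotaN (V : zmodType) (x : V) : iota_ (- x) = - iota_ x. Proof. by []. Qed.
Lemma iota0 (V : zmodType) : iota_ (0 : V) = 0. Proof. by []. Qed.
Lemma iota_inj (V : zmodType) : injective (@iota_ V). Proof. by move=> x y [->]. Qed.


Theorem mainTheorem10 (R : comNzRingType) (A : lmodType R) (m : A -> A -> A) :
  bilinear_prod m -> novikov m ->
  forall a b c d : A,
    anticomm m (assocp m a b c) d - anticomm m (assocp m a d c) b
    = anticomm m (comm m c a) (comm m b d).
Proof.
move=> [mDl [mDr _]] [n1 n2] a b c d.
have m0l : forall y, m 0 y = 0.
  move=> y; have h := mDl 0 0 y; rewrite addr0 in h.
  by apply: (addrI (m 0 y)); rewrite addr0 -h.
have m0r : forall y, m y 0 = 0.
  move=> y; have h := mDr y 0 0; rewrite addr0 in h.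
  by apply: (addrI (m y 0)); rewrite addr0 -h.
have mNl : forall x y, m (- x) y = - m x y.
  by move=> x y; apply: (addrI (m x y)); rewrite -mDl !subrr m0l.
have mNr : forall x y, m y (- x) = - m y x.
  by move=> x y; apply: (addrI (m y x)); rewrite -mDr !subrr m0r.
have z0 : (m (m a (m b c) - m (m a b) c - (m a (m c b) - m (m a c) b)) d) = 0.
  have e : (m a (m b c) - m (m a b) c - (m a (m c b) - m (m a c) b)) = 0 by apply/eqP; rewrite subr_eq0; apply/eqP; exact: n1.
  by rewrite e m0l.
have z1 : (m d (m a (m b c) - m (m a b) c - (m a (m c b) - m (m a c) b))) = 0.
  have e : (m a (m b c) - m (m a b) c - (m a (m c b) - m (m a c) b)) = 0 by apply/eqP; rewrite subr_eq0; apply/eqP; exact: n1.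
  by rewrite e m0r.
have z2 : (m (m a c) (m b d) - m (m (m a c) b) d - (m (m a c) (m d b) - m (m (m a c) d) b)) = 0 by apply/eqP; rewrite subr_eq0; apply/eqP; exact: n1.
have z3 : (m b (m (m a c) d) - m (m b (m a c)) d - (m b (m d (m a c)) - m (m b d) (m a c))) = 0 by apply/eqP; rewrite subr_eq0; apply/eqP; exact: n1.
have z4 : (m b (m d (m a c)) - m d (m b (m a c))) = 0 by apply/eqP; rewrite subr_eq0; apply/eqP; exact: n2.
have z5 : (m (m a (m c b) - m c (m a b)) d) = 0.
  have e : (m a (m c b) - m c (m a b)) = 0 by apply/eqP; rewrite subr_eq0; apply/eqP; exact: n2.
  by rewrite e m0l.
have z6 : (m d (m a (m c b) - m c (m a b))) = 0.
  have e : (m a (m c b) - m c (m a b)) = 0 by apply/eqP; rewrite subr_eq0; apply/eqP; exact: n2.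
  by rewrite e m0r.
have z7 : (m d (m (m a c) b) - m (m d (m a c)) b - (m d (m b (m a c)) - m (m d b) (m a c))) = 0 by apply/eqP; rewrite subr_eq0; apply/eqP; exact: n1.
have z8 : (m (m a (m c d) - m (m a c) d - (m a (m d c) - m (m a d) c)) b) = 0.
  have e : (m a (m c d) - m (m a c) d - (m a (m d c) - m (m a d) c)) = 0 by apply/eqP; rewrite subr_eq0; apply/eqP; exact: n1.
  by rewrite e m0l.
have z9 : (m b (m a (m c d) - m (m a c) d - (m a (m d c) - m (m a d) c))) = 0.
  have e : (m a (m c d) - m (m a c) d - (m a (m d c) - m (m a d) c)) = 0 by apply/eqP; rewrite subr_eq0; apply/eqP; exact: n1.
  by rewrite e m0r.
have z10 : (m (m a (m c d) - m c (m a d)) b) = 0.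
  have e : (m a (m c d) - m c (m a d)) = 0 by apply/eqP; rewrite subr_eq0; apply/eqP; exact: n2.
  by rewrite e m0l.
have z11 : (m b (m a (m c d) - m c (m a d))) = 0.
  have e : (m a (m c d) - m c (m a d)) = 0 by apply/eqP; rewrite subr_eq0; apply/eqP; exact: n2.
  by rewrite e m0r.
have z12 : (m (m b (m a c) - m (m b a) c - (m b (m c a) - m (m b c) a)) d) = 0.
  have e : (m b (m a c) - m (m b a) c - (m b (m c a) - m (m b c) a)) = 0 by apply/eqP; rewrite subr_eq0; apply/eqP; exact: n1.
  by rewrite e m0l.
have z13 : (m d (m b (m a c) - m (m b a) c - (m b (m c a) - m (m b c) a))) = 0.
  have e : (m b (m a c) - m (m b a) c - (m b (m c a) - m (m b c) a)) = 0 by apply/eqP; rewrite subr_eq0; apply/eqP; exact: n1.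
  by rewrite e m0r.
have z14 : (m (m c a) (m b d) - m (m (m c a) b) d - (m (m c a) (m d b) - m (m (m c a) d) b)) = 0 by apply/eqP; rewrite subr_eq0; apply/eqP; exact: n1.
have z15 : (m b (m (m c a) d) - m (m b (m c a)) d - (m b (m d (m c a)) - m (m b d) (m c a))) = 0 by apply/eqP; rewrite subr_eq0; apply/eqP; exact: n1.
have z16 : (m (m c (m a b) - m (m c a) b - (m c (m b a) - m (m c b) a)) d) = 0.
  have e : (m c (m a b) - m (m c a) b - (m c (m b a) - m (m c b) a)) = 0 by apply/eqP; rewrite subr_eq0; apply/eqP; exact: n1.
  by rewrite e m0l.
have z17 : (m d (m c (m a b) - m (m c a) b - (m c (m b a) - m (m c b) a))) = 0.
  have e : (m c (m a b) - m (m c a) b - (m c (m b a) - m (m c b) a)) = 0 by apply/eqP; rewrite subr_eq0; apply/eqP; exact: n1.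
  by rewrite e m0r.
have z18 : (m b (m d (m c a)) - m d (m b (m c a))) = 0 by apply/eqP; rewrite subr_eq0; apply/eqP; exact: n2.
have z19 : (m d (m (m c a) b) - m (m d (m c a)) b - (m d (m b (m c a)) - m (m d b) (m c a))) = 0 by apply/eqP; rewrite subr_eq0; apply/eqP; exact: n1.
have z20 : (m (m c (m a d) - m (m c a) d - (m c (m d a) - m (m c d) a)) b) = 0.
  have e : (m c (m a d) - m (m c a) d - (m c (m d a) - m (m c d) a)) = 0 by apply/eqP; rewrite subr_eq0; apply/eqP; exact: n1.
  by rewrite e m0l.
have z21 : (m b (m c (m a d) - m (m c a) d - (m c (m d a) - m (m c d) a))) = 0.
  have e : (m c (m a d) - m (m c a) d - (m c (m d a) - m (m c d) a)) = 0 by apply/eqP; rewrite subr_eq0; apply/eqP; exact: n1.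
  by rewrite e m0r.
have z22 : (m (m d (m a c) - m (m d a) c - (m d (m c a) - m (m d c) a)) b) = 0.
  have e : (m d (m a c) - m (m d a) c - (m d (m c a) - m (m d c) a)) = 0 by apply/eqP; rewrite subr_eq0; apply/eqP; exact: n1.
  by rewrite e m0l.
have z23 : (m b (m d (m a c) - m (m d a) c - (m d (m c a) - m (m d c) a))) = 0.
  have e : (m d (m a c) - m (m d a) c - (m d (m c a) - m (m d c) a)) = 0 by apply/eqP; rewrite subr_eq0; apply/eqP; exact: n1.
  by rewrite e m0r.
apply/eqP; rewrite -subr_eq0; apply/eqP.
transitivity (((m (m a (m b c) - m (m a b) c - (m a (m c b) - m (m a c) b)) d)) + ((m d (m a (m b c) - m (m a b) c - (m a (m c b) - m (m a c) b)))) + ((m (m a c) (m b d) - m (m (m a c) b) d - (m (m a c) (m d b) - m (m (m a c) d) b))) + ((m b (m (m a c) d) - m (m b (m a c)) d - (m b (m d (m a c)) - m (m b d) (m a c)))) + (((m b (m d (m a c)) - m d (m b (m a c))) + (m b (m d (m a c)) - m d (m b (m a c))))) + (((m (m a (m c b) - m c (m a b)) d) + (m (m a (m c b) - m c (m a b)) d))) + (((m d (m a (m c b) - m c (m a b))) + (m d (m a (m c b) - m c (m a b))))) + (- (m d (m (m a c) b) - m (m d (m a c)) b - (m d (m b (m a c)) - m (m d b) (m a c)))) + ((m (m a (m c d) - m (m a c) d - (m a (m d c) - m (m a d) c)) b)) + ((m b (m a (m c d) - m (m a c) d - (m a (m d c) - m (m a d) c)))) + (- ((m (m a (m c d) - m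 c (m a d)) b) + (m (m a (m c d) - m c (m a d)) b))) + (- ((m b (m a (m c d) - m c (m a d))) + (m b (m a (m c d) - m c (m a d))))) + ((m (m b (m a c) - m (m b a) c - (m b (m c a) - m (m b c) a)) d)) + ((m d (m b (m a c) - m (m b a) c - (m b (m c a) - m (m b c) a)))) + (- (m (m c a) (m b d) - m (m (m c a) b) d - (m (m c a) (m d b) - m (m (m c a) d) b))) + (- (m b (m (m c a) d) - m (m b (m c a)) d - (m b (m d (m c a)) - m (m b d) (m c a)))) + ((m (m c (m a b) - m (m c a) b - (m c (m b a) - m (m c b) a)) d)) + ((m d (m c (m a b) - m (m c a) b - (m c (m b a) - m (m c b) a)))) + (- ((m b (m d (m c a)) - m d (m b (m c a))) + (m b (m d (m c a)) - m d (m b (m c a))))) + ((m d (m (m c a) b) - m (m d (m c a)) b - (m d (m b (m c a)) - m (m d b) (m c a)))) + (- (m (m c (m a d) - m (m c a) d - (m c (m d a) - m (m c d) a)) b)) + (- (m b (m c (m a d) - m (m c a) d - (m c (m d a) - m (m c d) a)))) + (- (m (m d (m a c) - m (m d a) c - (m d (m c a) - m (m d c) a)) b)) + (- (m b (m d (m a c) - m (m d a) c - (m d (m c a) - m (m d c) a))))).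
  apply: iota_inj; rewrite /anticomm /comm /assocp !(mDl, mDr, mNl, mNr) !(iotaD, iotaN); ring.
by rewrite z0 z1 z5 z6 z8 z9 z10 z11 z12 z13 z16 z17 z20 z21 z22 z23 z2 z3 z4 z7 z14 z15 z18 z19 !(oppr0, addr0, add0r).
Qed.
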